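(* Every $\mathbb{C}$-algebra $R(A,P_0)$ obtained from data $(A,P_0)$ as described in the context is isomorphic as a $\mathbb{C}$-algebra (forgetting the $K_0$-grading) to a product $$\bigotimes_{i=1}^t R(A^{(i)},P_0^{(i)}) \otimes \mathbb{C}[S_1,\ldots,S_{m'}],$$ where the algebras $R(A^{(i)},P_0^{(i)})$ (each obtained by the same construction from data $(A^{(i)},P_0^{(i)})$) are indecomposable with $m^{(i)} = 0$ for all $i=1,\ldots,t$, and $m'\geq m$ holds.
   Context: Fix integers $r \geq c > 0$, $n_0,\ldots,n_r>0$ and $m\geq 0$, and set $n:=n_0+\ldots+n_r$. Let $A=(a_0,\ldots,a_r)$ be a $(c+1)\times(r+1)$ complex matrix of full rank with pairwise linearly independent columns $a_i$, and let $P_0$ be the $r\times(n+m)$ matrix built from tuples $l_i=(l_{i1},\ldots,l_{in_i})$ of positive integers, $$P_0=\left[\begin{array}{ccccccc} -l_0&l_1&&&0&\ldots&0\\ \vdots&&\ddots&&\vdots&&\vdots\\ -l_0&&&l_r&0&\ldots&0\end{array}\right].$$ In the polynomial ring $\mathbb{C}[T_{ij},S_k]$ ($i=0,\ldots,r$, $j=1,\ldots,n_i$, $k=1,\ldots,m$) set $T_i^{l_i}:=T_{i1}^{l_{i1}}\cdots T_{in_i}^{l_{in_i}}$ and, for $v\in\mathbb{C}^{r+1}$, $g_v:=v_0T_0^{l_0}+\ldots+v_rT_r^{l_r}$. Define $R(A,P_0):=\mathbb{C}[T_{ij},S_k]/\langle g_v;\ v\in\ker(A)\rangle$, graded by $K_0:=\mathbb{Z}^{n+m}/\mathrm{im}(P_0^*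 )$ via $\deg(T_{ij})$, $\deg(S_k)$ the images of the canonical basis vectors. The matrix $A$ is called indecomposable if for any subset $I$ of the column indices one has $\{0\}\neq \mathrm{Lin}(a_i;\ i\in I)\cap\mathrm{Lin}(a_j;\ j\notin I)$; the ring $R(A,P_0)$ is called indecomposable if $A$ is indecomposable and $l_{ij}n_i>1$ holds for all $i$ (and $j$). Here $m^{(i)}$ denotes the number of variables $S_k$ in the data for $R(A^{(i)},P_0^{(i)})$. *)

(* Defs.v *)
From mathcomp Require Import all_boot all_algebra.
From mathcomp Require Import complex Rstruct.
From mathcomp Require Export mpoly.

Unset Printing Implicit Defensive.

Import GRing.Theory.
Local Open Scope ring_scope.

Definition CC : numClosedFieldType := (Rdefinitions.R)[i].

Notation Pol N := {mpoly CC[N]}.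

(* The variable X_k of C[X_0..X_(N-1)] (0 if k >= N; only used for k < N). *)
Definition Xv (N k : nat) : Pol N :=
  match insub k with Some i => 'X_i | None => 0 end.

(* The variables T_ij (i = 0..r, j = 1..n_i) and S_k
   (k = 1..m) are numbered consecutively: T_ij is variable number
   n_0 + ... + n_(i-1) + (j-1), and S_k is variable number n + (k-1),
   where n = n_0 + ... + n_r.  The matrix P_0 is encoded by the exponent
   tuples l_i (field [l]: l i j is l_(i,j+1), j < n_i) and by m.           *)
Record data := Data {
  d_r : nat;
  d_c : nat;
  d_ns : 'I_d_r.+1 -> nat;
  d_m : nat;
  d_A : 'M[CC]_(d_c.+1, d_r.+1);
  d_l : 'I_d_r.+1 -> nat -> nat
}.

Definition d_n (D : data) : nat := \sum_(i < (d_r D).+1) d_ns D i.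

Definition nvars (D : data) : nat := (d_n D + d_m D)%N.

Definition offs (D : data) (i : 'I_(d_r D).+1) : nat :=
  \sum_(k < (d_r D).+1 | (k < i)%N) d_ns D k.

Definition Tmon (D : data) (i : 'I_(d_r D).+1) : Pol (nvars D) :=
  \prod_(j < d_ns D i) Xv (nvars D) (offs D i + j) ^+ d_l D i j.

Definition g_v (D : data) (v : 'cV[CC]_(d_r D).+1) : Pol (nvars D) :=
  \sum_(i < (d_r D).+1) v i 0 *: Tmon D i.

Definition rel_gens (D : data) (p : Pol (nvars D)) : Prop :=
  exists v : 'cV[CC]_(d_r D).+1, d_A D *m v = 0 /\ p = g_v D v.

Definition pairwise_lin_indep_cols {c r : nat} (A : 'M[CC]_(c.+1, r.+1)) :=
  forall i j : 'I_r.+1, i != j ->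
    forall a b : CC, a *: col i A + b *: col j A = 0 -> a = 0 /\ b = 0.

Definition valid_data (D : data) : Prop :=
  [/\ (d_c D <= d_r D)%N /\ (0 < d_c D)%N,
      (forall i, 0 < d_ns D i)%N,
      \rank (d_A D) = (d_c D).+1,
      pairwise_lin_indep_cols (d_A D)
    & forall i j, (j < d_ns D i)%N -> (0 < d_l D i j)%N].

Definition indecomposable_mx {c r : nat} (A : 'M[CC]_(c.+1, r.+1)) : Prop :=
  forall I : {set 'I_r.+1}, I != set0 -> I != setT ->
    exists (al be : 'I_r.+1 -> CC),
      \sum_(i in I) al i *: col i A = \sum_(j in ~: I) be j *: col j A /\
      \sum_(i in I) al i *: col i A != 0.

Definition indecomposable (D : data) : Prop :=
  indecomposable_mx (d_A D) /\
  forall i j, (j < d_ns D i)%N -> (1 < d_l D i j * d_ns D i)%N.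

Definition in_ideal {N : nat} (G : Pol N -> Prop) (p : Pol N) : Prop :=
  exists k (q g : 'I_k -> Pol N),
    (forall s, G (g s)) /\ p = \sum_(s < k) q s * g s.

Definition subst {N M : nat} (f : 'I_N -> Pol M) (p : Pol N) : Pol M :=
  comp_mpoly [tuple f s | s < N] p.

(* C[X]/<G> and C[Y]/<H> are isomorphic as C-algebras: there are C-algebra
   homomorphisms in both directions (given by the images of the variables)
   that are well defined on the quotients and mutually inverse there.       *)
Definition presented_iso {N M : nat} (G : Pol N -> Prop) (H : Pol M -> Prop)
  : Prop :=
  exists (f : 'I_N -> Pol M) (h : 'I_M -> Pol N),
    [/\ forall p, in_ideal G p -> in_ideal H (subst f p),
        forall q, in_ideal H q -> in_ideal G (subst h q),
        forall s, in_ideal G (subst h (f s) - 'X_s)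
      & forall s, in_ideal H (subst f (h s) - 'X_s)].

(* The tensor product (R(A^(1),P^(1)) ⊗ ... ⊗ R(A^(t),P^(t))) ⊗ C[S_1..S_m']
   presented as C[all variables of all factors, S_1..S_m'] modulo the ideal
   generated by the (renamed) relations of all factors: the variables of
   factor u occupy the block starting at nvars(D_0) + ... + nvars(D_(u-1)),
   and the free variables S_1..S_m' come last.                              *)
Definition tens_nvars {t : nat} (Ds : 'I_t -> data) (m' : nat) : nat :=
  (\sum_(u < t) nvars (Ds u) + m')%N.

Definition tens_offs {t : nat} (Ds : 'I_t -> data) (u : 'I_t) : nat :=
  \sum_(w < t | (w < u)%N) nvars (Ds w).

Definition tens_gens {t : nat} (Ds : 'I_t -> data) (m' : nat)
  (p : Pol (tens_nvars Ds m')) : Prop :=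
  exists (u : 'I_t) (g : Pol (nvars (Ds u))),
    rel_gens (Ds u) g /\
    p = subst (fun s : 'I_(nvars (Ds u)) =>
                 Xv (tens_nvars Ds m') (tens_offs Ds u + s)) g.

(* Main.v *)
Require Import Defs.
From mathcomp Require Import all_boot all_algebra.
From mathcomp Require Import all_order mpoly zify.
From Stdlib Require Import Classical ClassicalEpsilon.
Import GRing.Theory.
Local Open Scope ring_scope.

Section Ideal.
Context {N : nat}.
Implicit Types (G : Pol N -> Prop).

Lemma in_ideal0 G : in_ideal G 0.
Proof.
exists 0%N, (fun _ => 0), (fun _ => 0); split; first by case.
by rewrite big_ord0.
Qed.

Lemma in_idealD G p q : in_ideal G p -> in_ideal G q -> in_ideal G (p + q).
Proof.
case=> [k1 [q1 [g1 [H1 ->]]]] [k2 [q2 [g2 [H2 ->]]]].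
exists (k1 + k2)%N, (fun s => match split s with inl a => q1 a | inr b => q2 b end),
  (fun s => match split s with inl a => g1 a | inr b => g2 b end).
split; first by move=> s; case: (split s).
rewrite big_split_ord /=; congr (_ + _); apply: eq_bigr => i _.
  by rewrite -[lshift _ _]/(unsplit (inl i)) unsplitK.
by rewrite -[rshift _ _]/(unsplit (inr i)) unsplitK.
Qed.

Lemma in_idealMl G a p : in_ideal G p -> in_ideal G (a * p).
Proof.
case=> k [q [g [Hg ->]]]; exists k, (fun s => a * q s), g; split => //.
by rewrite mulr_sumr; apply: eq_bigr => s _; rewrite mulrA.
Qed.

Lemma in_ideal_gen G p : G p -> in_ideal G p.
Proof.
move=> Gp; exists 1%N, (fun _ => 1), (fun _ => p); split => //.
by rewrite big_ord1 mul1r.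
Qed.

Lemma in_idealN G p : in_ideal G p -> in_ideal G (- p).
Proof. by move=> H; rewrite -mulN1r; apply: in_idealMl. Qed.

Lemma in_ideal_sum G (I : Type) (r : seq I) (P : pred I) (F : I -> Pol N) :
  (forall i, P i -> in_ideal G (F i)) -> in_ideal G (\sum_(i <- r | P i) F i).
Proof.
move=> H; elim/big_rec: _ => [|i x Pi Hx]; first exact: in_ideal0.
by apply: in_idealD => //; apply: H.
Qed.

End Ideal.

Lemma XvE N (i : 'I_N) : Xv N i = 'X_i.
Proof. by rewrite /Xv valK. Qed.

Section Subst.
Context {N M : nat} (f : 'I_N -> Pol M).

Lemma substX (i : 'I_N) : subst f 'X_i = f i.
Proof. by rewrite /subst comp_mpolyXU -tnth_nth tnth_mktuple. Qed.

Lemma substXv (i : 'I_N) : subst f (Xv N i) = f i.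
Proof. by rewrite XvE substX. Qed.

Lemma substD p q : subst f (p + q) = subst f p + subst f q.
Proof. by rewrite /subst rmorphD. Qed.
Lemma substB p q : subst f (p - q) = subst f p - subst f q.
Proof. by rewrite /subst rmorphB. Qed.
Lemma substN p : subst f (- p) = - subst f p.
Proof. by rewrite /subst rmorphN. Qed.
Lemma substM p q : subst f (p * q) = subst f p * subst f q.
Proof. by rewrite /subst rmorphM. Qed.
Lemma substZ c p : subst f (c *: p) = c *: subst f p.
Proof. by rewrite /subst comp_mpolyZ. Qed.
Lemma substXn p k : subst f (p ^+ k) = subst f p ^+ k.
Proof. by rewrite /subst rmorphXn. Qed.
Lemma subst_sum (I : Type) (r : seq I) (P : pred I) (F : I -> Pol N) :
  subst f (\sum_(i <- r | P i) F i) = \sum_(i <- r | P i) subst f (F i).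
Proof. by rewrite /subst rmorph_sum. Qed.
Lemma subst_prod (I : Type) (r : seq I) (P : pred I) (F : I -> Pol N) :
  subst f (\prod_(i <- r | P i) F i) = \prod_(i <- r | P i) subst f (F i).
Proof. by rewrite /subst rmorph_prod. Qed.

Lemma subst_ideal (G : Pol N -> Prop) (H : Pol M -> Prop) :
  (forall g, G g -> in_ideal H (subst f g)) ->
  forall p, in_ideal G p -> in_ideal H (subst f p).
Proof.
move=> HG p [k [q [g [Hg ->]]]]; rewrite subst_sum; apply: in_ideal_sum => s _.
by rewrite substM; apply: in_idealMl; apply: HG.
Qed.
End Subst.

Lemma iso_crit {N M : nat} (G : Pol N -> Prop) (H : Pol M -> Prop)
  (f : 'I_N -> Pol M) (h : 'I_M -> Pol N) :
  (forall g, G g -> in_ideal H (subst f g)) ->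
  (forall g, H g -> in_ideal G (subst h g)) ->
  (forall s, in_ideal G (subst h (f s) - 'X_s)) ->
  (forall s, in_ideal H (subst f (h s) - 'X_s)) ->
  presented_iso G H.
Proof.
move=> H1 H2 H3 H4; exists f, h; split; [exact: subst_ideal|exact: subst_ideal|exact: H3|exact: H4].
Qed.

Section Offs.
Context {k : nat} (a : 'I_k -> nat).
Definition off (i : nat) := (\sum_(w < k | (w < i)%N) a w)%N.

Lemma off_uniq {i i' j j'} : (j < a i)%N -> (j' < a i')%N ->
  (off i + j = off i' + j')%N -> i = i' /\ j = j'.
Proof.
move=> lj lj' E.
have := @tagnat.eq_Rank k a i i' (Ordinal lj) (Ordinal lj').
rewrite !tagnat.RankEsum /= -/(off i) -/(off i') E eqxx.
by move/esym/andP => [/eqP -> /eqP ->].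
Qed.

Lemma off_exists p : (p < \sum_i a i)%N ->
  exists i j, (j < a i)%N /\ p = (off i + j)%N.
Proof.
move=> lp; pose s : 'I_(\sum_i a i) := Ordinal lp.
exists (tagnat.sig1 s), (tagnat.sig2 s); split => //.
by have := tagnat.rect s.
Qed.

Lemma off_lt {i j} : (j < a i)%N -> (off i + j < \sum_i a i)%N.
Proof.
move=> lj; have := ltn_ord (@tagnat.Rank k a i (Ordinal lj)).
by rewrite tagnat.RankEsum.
Qed.
End Offs.


Section JSel.
Context {c r : nat} (A : 'M[CC]_(c.+1, r.+1)) (L : {set 'I_r.+1}).

Definition goodJ (J : {set 'I_r.+1}) (w : 'I_r.+1 -> 'cV[CC]_r.+1) :=
  J \subset L /\ forall j, j \in J ->
    [/\ A *m w j = 0, w j j 0 = 1 & forall j', j' \in J -> j' != j -> w j j' 0 = 0].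

Definition Pmax (J : {set 'I_r.+1}) :=
  forall v : 'cV[CC]_r.+1, A *m v = 0 -> (forall j, j \in J -> v j 0 = 0) ->
    forall i, i \in L -> v i 0 = 0.

Lemma existsJ_aux k : forall J w, goodJ J w -> (#|L :\: J| <= k)%N ->
  exists J' w', goodJ J' w' /\ Pmax J'.
Proof.
elim: k => [|k IH] J w [sJL Hw] Hk.
  exists J, w; split => //; move=> v Av vJ i iL; apply: vJ.
  by move: Hk; rewrite leqn0 cards_eq0 => /eqP/setP/(_ i); rewrite !inE iL andbT => /negbFE.
case: (classic (Pmax J)) => [HP|]; first by exists J, w.
move=> /not_all_ex_not [v /not_all_ex_not [Av /not_all_ex_not [vJ /not_all_ex_not [i]]]].
move=> /(imply_to_and (i \in L)) [iL vi].
have iJ : i \notin J by apply/negP => /vJ.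
have vi' : v i 0 != 0 by apply/eqP.
pose w' j := if j == i then (v i 0)^-1 *: v else w j - (w j i 0 / v i 0) *: v.
apply: (IH (i |: J) w'); last first.
  rewrite -ltnS; apply: (leq_trans _ Hk); apply: proper_card.
  rewrite setDUr; apply/properP; split; first exact: subsetIr.
  by exists i; rewrite !inE ?iL ?iJ ?eqxx //=.
split.
  by rewrite subUset sub1set iL.
move=> j; rewrite !inE => /orP [/eqP ->|jJ].
  rewrite /w' eqxx; split.
  - by rewrite -scalemxAr Av scaler0.
  - by rewrite mxE mulVf.
  - move=> j'; rewrite !inE => /orP [/eqP -> |j'J]; first by rewrite eqxx.
    by move=> _; rewrite mxE (vJ _ j'J) mulr0.
have ji : (j == i) = false by apply/negbTE; apply/eqP => E; move: iJ; rewrite -E jJ.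
have [A1 A2 A3] := Hw j jJ.
rewrite /w' ji; split.
- by rewrite mulmxBr -scalemxAr Av scaler0 A1 subr0.
- by rewrite !mxE A2 (vJ _ jJ) mulr0 subr0.
- move=> j'; rewrite !inE => /orP [/eqP -> |j'J] j'j.
    by rewrite !mxE mulfVK ?subrr.
  by rewrite !mxE (A3 _ j'J j'j) (vJ _ j'J) mulr0 subr0.
Qed.

Lemma existsJ : exists J w, goodJ J w /\ Pmax J.
Proof.
apply: (existsJ_aux #|L| set0 (fun _ => 0)); last by rewrite setD0.
by split; [rewrite sub0set | move=> j; rewrite inE].
Qed.
End JSel.


Definition decP (P : Prop) : bool :=
  if excluded_middle_informative P then true else false.
Lemma decPP P : reflect P (decP P).
Proof. by rewrite /decP; case: excluded_middle_informative => h; constructor. Qed.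

Definition fixrk {k n : nat} (X : 'M[CC]_(k, n)) : 'M[CC]_(k.-1.+1, n) :=
  match k as k0 return 'M[CC]_(k0, n) -> 'M[CC]_(k0.-1.+1, n) with
  | 0 => fun _ => 0 | k'.+1 => fun X => X end X.

Lemma fixrk_ker k n (X : 'M[CC]_(k, n)) (x : 'cV[CC]_n) :
  (0 < k)%N -> (fixrk X *m x == 0) = (X *m x == 0).
Proof. by case: k X. Qed.

Lemma fixrk_rank k n (X : 'M[CC]_(k, n)) : (0 < k)%N -> \rank (fixrk X) = \rank X.
Proof. by case: k X. Qed.

Lemma row_base_ker m n (X : 'M[CC]_(m, n)) (x : 'cV[CC]_n) :
  (row_base X *m x == 0) = (X *m x == 0).
Proof.
have h1 : (row_base X <= X)%MS by rewrite eq_row_base.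
have h2 : (X <= row_base X)%MS by rewrite eq_row_base.
case/submxP: h1 => D1 E1; case/submxP: h2 => D2 E2.
apply/eqP/eqP => H.
  by rewrite E2 -mulmxA H mulmx0.
by rewrite E1 -mulmxA H mulmx0.
Qed.

Lemma row_base_rank m n (X : 'M[CC]_(m, n)) : \rank (row_base X) = \rank X.
Proof. by rewrite eq_row_base. Qed.

Lemma mulmx_col_sum m n (X : 'M[CC]_(m, n)) (x : 'cV[CC]_n) :
  X *m x = \sum_k x k 0 *: col k X.
Proof.
apply/colP => i; rewrite !mxE summxE; apply: eq_bigr => k _.
by rewrite !mxE mulrC.
Qed.

Lemma col2_mul m n (X : 'M[CC]_(m, n)) i j (a b : CC) :
  a *: col i X + b *: col j X = X *m (a *: delta_mx i 0 + b *: delta_mx j 0).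
Proof. by rewrite mulmxDr -!scalemxAr -!colE. Qed.

Lemma rank_le1_dep c n (k : nat) (Dm : 'M[CC]_(c, k)) (Y : 'M[CC]_(k, n)) k1 k2 :
  (k <= 1)%N -> exists a b : CC, (a != 0 \/ b != 0) /\
     a *: col k1 (Dm *m Y) + b *: col k2 (Dm *m Y) = 0.
Proof.
case: k Dm Y => [|[|//]] Dm Y _.
  exists 1, 0; split; first by left; rewrite oner_neq0.
  by rewrite thinmx0 mul0mx !col0 !scaler0 addr0.
have colE1 k0 : col k0 (Dm *m Y) = Y 0 k0 *: col 0 Dm.
  by apply/colP => x; rewrite !mxE big_ord1 mulrC.
case: (eqVneq (Y 0 k1) 0) => h.
  exists 1, 0; split; first by left; rewrite oner_neq0.
  by rewrite colE1 h !(scale0r, scaler0, addr0).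
exists (Y 0 k2), (- Y 0 k1); split; first by right; rewrite oppr_eq0.
by rewrite !colE1 !scalerA mulNr mulrC scaleNr subrr.
Qed.

Section Main.
Variable D : data.
Hypothesis HD : valid_data D.
Local Notation r := (d_r D).
Local Notation c := (d_c D).
Local Notation A := (d_A D).
Definition Lset := [set i : 'I_r.+1 | (d_ns D i == 1%N) && (d_l D i 0 == 1%N)].
Variable J : {set 'I_r.+1}.
Variable w : 'I_r.+1 -> 'cV[CC]_r.+1.
Hypothesis HJ : goodJ A Lset J w.
Hypothesis HP : Pmax A Lset J.

Definition Kp (v : 'cV[CC]_r.+1) := A *m v = 0 /\ forall j, j \in J -> v j 0 = 0.
Definition restr (I : {set 'I_r.+1}) (v : 'cV[CC]_r.+1) : 'cV[CC]_r.+1 :=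
  \col_i (if i \in I then v i 0 else 0).
Definition splits (I : {set 'I_r.+1}) := forall v, Kp v -> A *m restr I v = 0.
Definition blk (i : 'I_r.+1) := \bigcap_(I | decP (splits I) && (i \in I)) I.
Definition nonfree (B : {set 'I_r.+1}) :=
  decP (exists v, Kp v /\ v != 0 /\ forall i, i \notin B -> v i 0 = 0).

Lemma restrE I v i : restr I v i 0 = if i \in I then v i 0 else 0.
Proof. by rewrite mxE. Qed.

Lemma splitsK {I v} : splits I -> Kp v -> Kp (restr I v).
Proof.
move=> sI [Av vJ]; split; first exact: sI.
by move=> j jJ; rewrite restrE vJ //; case: ifP.
Qed.

Lemma splitsT : splits setT.
Proof.
move=> v [Av _]; rewrite -Av; congr (_ *m _); apply/colP => i.
by rewrite restrE inE.
Qed.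

Lemma splitsI I1 I2 : splits I1 -> splits I2 -> splits (I1 :&: I2).
Proof.
move=> s1 s2 v Kv; have -> : restr (I1 :&: I2) v = restr I1 (restr I2 v).
  by apply/colP => i; rewrite !restrE inE; case: (i \in I1); case: (i \in I2).
exact/s1/splitsK.
Qed.

Lemma splitsC I : splits I -> splits (~: I).
Proof.
move=> sI v Kv; have -> : restr (~: I) v = v - restr I v.
  by apply/colP => i; rewrite !mxE inE; case: (i \in I); rewrite ?subrr ?subr0.
by rewrite mulmxBr (sI v Kv) subr0; case: Kv.
Qed.

Lemma splits_blk i : splits (blk i).
Proof.
rewrite /blk; apply: (big_ind (fun X => splits X)).
- exact: splitsT.
- exact: splitsI.
- by move=> I /andP [/decPP].
Qed.

Lemma blk_mem i : i \in blk i.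
Proof. by apply/bigcapP => I /andP []. Qed.

Lemma blk_min {I i} : splits I -> i \in I -> blk i \subset I.
Proof.
move=> sI iI; apply: (@bigcap_inf _ _ I); apply/andP; split => //.
exact/decPP.
Qed.

Lemma blk_eq i j : j \in blk i -> blk j = blk i.
Proof.
move=> ji; have s1 : blk j \subset blk i by apply: blk_min => //; exact: splits_blk.
apply/eqP; rewrite eqEsubset s1 /=.
case: (boolP (i \in blk j)) => ij; first by apply: blk_min => //; exact: splits_blk.
have sX : splits (blk i :&: ~: blk j) by apply: splitsI; [|apply: splitsC]; exact: splits_blk.
have := @blk_min _ i sX; rewrite !inE blk_mem ij => /(_ isT) /subsetP /(_ j ji).
by rewrite !inE blk_mem andbF.
Qed.

Lemma nonfreeP (B : {set 'I_r.+1}) : reflect (exists v, Kp v /\ v != 0 /\ forall i, i \notin B -> v i 0 = 0)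
  (nonfree B).
Proof. exact: decPP. Qed.

Lemma Kp_free i v : ~~ nonfree (blk i) -> Kp v -> v i 0 = 0.
Proof.
move=> nf Kv; have K2 := splitsK (splits_blk i) Kv.
case: (eqVneq (restr (blk i) v) 0) => [E|NE].
  by have := congr1 (fun M : 'cV[CC]_r.+1 => M i 0) E; rewrite restrE blk_mem mxE.
case/negP: nf; apply/nonfreeP; exists (restr (blk i) v); split => //; split => //.
by move=> k kB; rewrite restrE (negbTE kB).
Qed.

Lemma L_free i : i \in Lset -> ~~ nonfree (blk i).
Proof.
move=> iL; have s1 : splits [set i].
  move=> v [Av vJ]; have -> : restr [set i] v = 0; last by rewrite mulmx0.
  apply/colP => k; rewrite restrE inE mxE; case: eqP => // ->.
  exact: (HP _ Av vJ _ iL).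
have sub := blk_min s1 (set11 i).
apply/negP => /nonfreeP [v [[Av vJ] [nz supp]]]; case/negP: nz; apply/eqP/colP => k.
rewrite mxE; case: (boolP (k \in blk i)) => kB; last exact: supp.
move/subsetP: sub => /(_ k kB); rewrite inE => /eqP ->.
exact: (HP _ Av vJ _ iL).
Qed.

Lemma J_free j : j \in J -> ~~ nonfree (blk j).
Proof. by move=> jJ; apply: L_free; case: HJ => /subsetP sJ _; apply: sJ. Qed.


Definition Bs := [set B in [set blk i | i : 'I_r.+1] | nonfree B].
Definition BsS := enum Bs.
Definition sB (B : {set 'I_r.+1}) := enum B.
Definition rB (B : {set 'I_r.+1}) := (#|B|).-1.
Definition MB (B : {set 'I_r.+1}) : 'M[CC]_(c.+1, (rB B).+1) :=
  \matrix_(x, y) A x (nth ord0 (sB B) y).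
Definition mkD (B : {set 'I_r.+1}) : data :=
  Data (rB B) (\rank (MB B)).-1 (fun k => d_ns D (nth ord0 (sB B) k)) 0
       (fixrk (row_base (MB B))) (fun k => d_l D (nth ord0 (sB B) k)).
Definition proj B (v : 'cV[CC]_r.+1) : 'cV[CC]_(rB B).+1 :=
  \col_k v (nth ord0 (sB B) k) 0.
Definition ext B (x : 'cV[CC]_(rB B).+1) : 'cV[CC]_r.+1 :=
  \col_i (if i \in B then x (inord (index i (sB B))) 0 else 0).

Lemma inBs {B} : B \in Bs -> nonfree B /\ exists i, B = blk i.
Proof. by rewrite inE => /andP [/imsetP [i _ ->] nf]; split => //; exists i. Qed.

Lemma Bs_blk {B} i : B \in Bs -> i \in B -> blk i = B.
Proof. by case/inBs => _ [i0 ->]; apply: blk_eq. Qed.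

Lemma blk_Bs {i} : nonfree (blk i) -> blk i \in Bs.
Proof. by move=> nf; rewrite inE nf andbT; apply/imsetP; exists i. Qed.

Lemma cardB {B} : B \in Bs -> (rB B).+1 = #|B|.
Proof.
case/inBs => _ [i ->]; rewrite /rB prednK //; apply/card_gt0P; exists i.
exact: blk_mem.
Qed.

Lemma size_sB {B} : B \in Bs -> size (sB B) = (rB B).+1.
Proof. by move=> HB; rewrite cardB // cardE. Qed.

Lemma nth_sB_in {B} (k : 'I_(rB B).+1) : B \in Bs -> nth ord0 (sB B) k \in B.
Proof.
by move=> HB; rewrite -[_ \in B](mem_enum B) mem_nth // size_sB.
Qed.

Lemma nth_sB_inj {B} (k k' : 'I_(rB B).+1) : B \in Bs ->
  nth ord0 (sB B) k = nth ord0 (sB B) k' -> k = k'.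
Proof.
move=> HB /eqP; rewrite nth_uniq ?size_sB ?enum_uniq // => /eqP E.
exact: val_inj.
Qed.

Lemma index_sB {B} i : B \in Bs -> i \in B ->
  (index i (sB B) < (rB B).+1)%N /\ nth ord0 (sB B) (index i (sB B)) = i.
Proof.
move=> HB iB; rewrite -size_sB // index_mem mem_enum iB; split => //.
by rewrite nth_index // mem_enum.
Qed.

Lemma RI {V : nmodType} B (F : 'I_r.+1 -> V) : B \in Bs ->
  (forall i, i \notin B -> F i = 0) ->
  \sum_i F i = \sum_(k < (rB B).+1) F (nth ord0 (sB B) k).
Proof.
move=> HB HF; rewrite (bigID (mem B)) /= [X in _ + X]big1 ?addr0; last first.
  by move=> i iB; apply: HF.
rewrite -big_enum [LHS](big_nth ord0) (size_sB HB) big_mkord.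
by [] || apply: eq_bigl.
Qed.

Lemma ext_nth {B} (x : 'cV[CC]_(rB B).+1) (k : 'I_(rB B).+1) : B \in Bs ->
  ext B x (nth ord0 (sB B) k) 0 = x k 0.
Proof.
move=> HB; rewrite mxE nth_sB_in // index_uniq ?size_sB ?enum_uniq //.
by rewrite inord_val.
Qed.

Lemma MB_ext {B} (x : 'cV[CC]_(rB B).+1) : B \in Bs -> MB B *m x = A *m ext B x.
Proof.
move=> HB; rewrite !mulmx_col_sum (@RI _ B) //; last first.
  by move=> i iB; rewrite mxE (negbTE iB) scale0r.
apply: eq_bigr => k _; rewrite ext_nth //; congr (_ *: _).
by apply/colP => x0; rewrite !mxE.
Qed.

Lemma ext_proj {B} v : B \in Bs -> ext B (proj B v) = restr B v.
Proof.
move=> HB; apply/colP => i; rewrite restrE mxE; case: ifP => // iB.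
have [lt E] := index_sB _ HB iB.
by rewrite mxE inordK // E.
Qed.

Lemma pw : pairwise_lin_indep_cols A.
Proof. by case: HD. Qed.

Lemma r_pos : (0 < r)%N.
Proof. by case: HD => [[cr c0] _ _ _ _]; apply: leq_trans cr. Qed.

Lemma two_in_B {B} : B \in Bs -> exists i1 i2, [/\ i1 \in B, i2 \in B & i1 != i2].
Proof.
case/inBs => /nonfreeP [v [[Av vJ] [nz supp]]] _.
have [i1 vi1] : exists i1, v i1 0 != 0.
  apply: NNPP => H; case/negP: nz; apply/eqP/colP => i; rewrite mxE.
  by apply: NNPP => Hi; apply: H; exists i; apply/eqP.
have i1B : i1 \in B by apply: NNPP => /negP/supp; apply/eqP.
case: (classic (exists i2, i2 != i1 /\ v i2 0 != 0)) => [[i2 [ne vi2]]|H].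
  exists i1, i2; split => //; last by rewrite eq_sym.
  by apply: NNPP => /negP/supp; apply/eqP.
exfalso; pose j : 'I_r.+1 := if i1 == ord0 then ord_max else ord0.
have ji1 : i1 != j.
  rewrite /j; case: (eqVneq i1 ord0) => [E|NE] //.
  rewrite E; apply/eqP => /(congr1 val) /=.
  by have := r_pos; case: (d_r D).
have := @pw i1 j ji1 (v i1 0) 0.
have -> : v i1 0 *: col i1 A + 0 *: col j A = A *m v.
  rewrite mulmx_col_sum (bigD1 i1) // [X in _ = _ + X]big1; first by rewrite scale0r !addr0.
  move=> i ne; have -> : v i 0 = 0 by apply: NNPP => Hi; apply: H; exists i; split => //; apply/eqP.
  by rewrite scale0r.
by move=> /(_ Av) [E _]; move: vi1; rewrite E eqxx.
Qed.

Lemma colMB B (k : 'I_(rB B).+1) : col k (MB B) = col (nth ord0 (sB B) k) A.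
Proof. by apply/colP => x; rewrite !mxE. Qed.

Lemma rank2 {B} : B \in Bs -> (1 < \rank (MB B))%N.
Proof.
move=> HB; have [i1 [i2 [i1B i2B ne]]] := two_in_B HB.
have [l1 E1] := index_sB _ HB i1B; have [l2 E2] := index_sB _ HB i2B.
rewrite ltnNge; apply/negP => le1.
have h2 : (MB B <= row_base (MB B))%MS by rewrite eq_row_base.
case/submxP: h2 => Dm EM.
have [a [b [nz E]]] := @rank_le1_dep _ _ _ Dm (row_base (MB B)) (Ordinal l1) (Ordinal l2) le1.
rewrite -EM !colMB /= E1 E2 in E.
have [a0 b0] := pw _ _ ne _ _ E.
by case: nz; rewrite ?a0 ?b0 eqxx.
Qed.

Lemma AuE {B} (x : 'cV[CC]_(rB B).+1) : B \in Bs ->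
  (d_A (mkD B) *m x == 0) = (MB B *m x == 0).
Proof.
move=> HB; have hp : (0 < \rank (MB B))%N by exact: (leq_trans _ (rank2 HB)).
by rewrite /= fixrk_ker // row_base_ker.
Qed.

Lemma valid_mkD B : B \in Bs -> valid_data (mkD B).
Proof.
move=> HB; have r2 := rank2 HB.
have [[cr c0] nsp rk _ lp] := HD.
split => /=.
- split; last by rewrite -ltnS prednK // (leq_trans _ r2).
  rewrite -ltnS prednK ?(leq_trans _ r2) //; exact: rank_leq_col.
- by move=> k; apply: nsp.
- have hp : (0 < \rank (MB B))%N by exact: (leq_trans _ r2).
  by rewrite fixrk_rank // row_base_rank prednK // (leq_trans _ r2).
- move=> i j ne a b; rewrite col2_mul => /eqP; rewrite AuE // => /eqP.
  rewrite -col2_mul !colMB; apply: pw; apply/negP => /eqP /nth_sB_inj E.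
  by move: ne; rewrite E ?eqxx.
- by move=> i j; apply: lp.
Qed.


Lemma splits_Bs {B} : B \in Bs -> splits B.
Proof. by case/inBs => _ [i ->]; exact: splits_blk. Qed.

Lemma proj_ker {B} v : B \in Bs -> Kp v -> MB B *m proj B v = 0.
Proof. by move=> HB Kv; rewrite MB_ext // ext_proj //; apply: splits_Bs. Qed.

Lemma indec_mkD B : B \in Bs -> indecomposable (mkD B).
Proof.
move=> HB; split; last first.
  move=> k j /=; set i := nth ord0 (sB B) k => lj.
  have iB : i \in B := nth_sB_in k HB.
  have iL : i \notin Lset.
    apply/negP => /L_free; rewrite (Bs_blk i HB iB); by case/inBs: HB => ->.
  have [_ nsp _ _ lp] := HD.
  move: iL; rewrite inE negb_and => iL.
  have n0 := nsp i; have l0 := lp i j lj.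
  case: (eqVneq (d_ns D i) 1%N) => [ns1|ns1].
    have j0 : j = 0%N by move: lj; rewrite ns1 ltnS leqn0 => /eqP.
    subst j; rewrite ns1 /= in iL; rewrite ns1 muln1.
    by rewrite ltn_neqAle eq_sym iL l0.
  by nia.
move=> I I0 IT /=; apply: NNPP => Hn.
set Au := fixrk (row_base (MB B)).
have H : forall al be : 'I_(rB B).+1 -> CC,
    \sum_(i in I) al i *: col i Au = \sum_(j in ~: I) be j *: col j Au ->
    \sum_(i in I) al i *: col i Au = 0.
  move=> al be E; apply/eqP; apply: NNPP => nz; apply: Hn; exists al, be; split => //.
  exact/negP.
set I' := [set nth ord0 (sB B) (k : 'I_(rB B).+1) | k in I].
have injn : injective (fun k : 'I_(rB B).+1 => nth ord0 (sB B) k).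
  by move=> a b; apply: nth_sB_inj.
have sI' : splits I'.
  move=> v Kv; set x := proj B v.
  have Mx : MB B *m x = 0 by apply: proj_ker.
  have Ax : Au *m x = 0 by apply/eqP; rewrite AuE // Mx.
  have E : \sum_(k in I) x k 0 *: col k Au = \sum_(k in ~: I) (- x k 0) *: col k Au.
    have E0 := Ax; rewrite mulmx_col_sum (bigID (mem I)) /= in E0.
    rewrite -[LHS](addrK (\sum_(i < (rB B).+1 | i \notin I) x i 0 *: col i Au)) E0 sub0r.
    rewrite -sumrN; apply: eq_big => k; first by rewrite inE.
    by rewrite scaleNr.
  have E2 := H _ _ E.
  set xI : 'cV[CC]_(rB B).+1 := \col_k (if k \in I then x k 0 else 0).
  have AxI : Au *m xI = 0.
    rewrite -E2 mulmx_col_sum [RHS]big_mkcond; apply: eq_bigr => k _; rewrite mxE.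
    by case: ifP => _; rewrite ?scale0r.
  have MxI : MB B *m xI = 0 by apply/eqP; rewrite -AuE // AxI.
  have extE : ext B xI = restr I' v.
    apply/colP => i; rewrite restrE !mxE.
    case: (boolP (i \in B)) => iB.
      have [lt Ei] := index_sB _ HB iB.
      have ki : i = nth ord0 (sB B) (inord (index i (sB B)) : 'I_(rB B).+1).
        by rewrite inordK.
      have memI : (i \in I') = (inord (index i (sB B)) \in I).
        by rewrite {1}ki mem_imset.
      by rewrite memI -ki.
    case: ifP => // /imsetP [k _ Ek].
    by move: iB; rewrite Ek nth_sB_in.
  by rewrite -extE -MB_ext.
have [k0 k0I] := set0Pn _ I0.
have sub := blk_min sI' (imset_f (fun k : 'I_(rB B).+1 => nth ord0 (sB B) k) k0I).
rewrite (Bs_blk _ HB (nth_sB_in k0 HB)) in sub.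
case/negP: IT; apply/eqP/setP => k; rewrite inE.
have := subsetP sub _ (nth_sB_in k HB).
by rewrite mem_imset.
Qed.


Definition tB := size BsS.
Definition Ds (u : 'I_tB) : data := mkD (nth set0 BsS u).
Definition nvDs (u : 'I_tB) : nat := nvars (Ds u).
Definition dec (p : nat) : 'I_r.+1 :=
  odflt ord0 [pick i : 'I_r.+1 | (offs D i <= p < offs D i + d_ns D i)%N].
Definition isNF (p : nat) := (p < d_n D)%N && nonfree (blk (dec p)).
Definition Jpos (p : nat) := (p < d_n D)%N && (dec p \in J).
Definition Fset := [set p : 'I_(nvars D) |
  ~~ (p < d_n D)%N || (~~ nonfree (blk (dec p)) && (dec p \notin J))].
Definition mF := #|Fset|.
Definition SNV := (\sum_(u < tB) nvDs u)%N.
Definition MM := tens_nvars Ds mF.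
Definition posn (p : nat) : nat :=
  if isNF p then
    (off nvDs (index (blk (dec p)) BsS) +
      (off (d_ns (mkD (blk (dec p)))) (index (dec p) (sB (blk (dec p)))) +
        (p - offs D (dec p))))%N
  else (SNV + index p (map val (enum Fset)))%N.

Lemma MME : MM = (SNV + mF)%N.
Proof. by []. Qed.

Lemma dec_spec {p} : (p < d_n D)%N ->
  (offs D (dec p) <= p < offs D (dec p) + d_ns D (dec p))%N.
Proof.
move=> lp; have [i [j [lj E]]] := @off_exists _ (d_ns D) p lp.
rewrite /dec; case: pickP => [i' //|H]; move: (H i).
by rewrite E /offs -/(off _ _) leq_addr ltn_add2l lj.
Qed.

Lemma offs_lt {i j} : (j < d_ns D i)%N -> (offs D i + j < d_n D)%N.
Proof. exact: off_lt. Qed.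

Lemma dec_offs i j : (j < d_ns D i)%N -> dec (offs D i + j) = i.
Proof.
move=> lj; have := dec_spec (offs_lt lj); set i' := dec _ => /andP [h1 h2].
have E : (offs D i + j = offs D i' + (offs D i + j - offs D i'))%N by rewrite subnKC.
have lj' : (offs D i + j - offs D i' < d_ns D i')%N by rewrite ltn_subLR.
by have [-> _] := off_uniq _ lj lj' E.
Qed.

Lemma index_BsS {B} : B \in Bs -> (index B BsS < tB)%N.
Proof. by move=> HB; rewrite index_mem mem_enum. Qed.

Lemma nth_BsS (u : 'I_tB) : nth set0 BsS u \in Bs.
Proof. by rewrite -[_ \in Bs](mem_enum Bs) mem_nth. Qed.

Lemma Ds_index {B} (HB : B \in Bs) : Ds (Ordinal (index_BsS HB)) = mkD B.
Proof. by rewrite /Ds /= nth_index // mem_enum. Qed.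

Lemma nvars_mkD B : nvars (mkD B) = \sum_(k < (rB B).+1) d_ns D (nth ord0 (sB B) k).
Proof. by rewrite /nvars addn0. Qed.

Lemma NF_of i j : (j < d_ns D i)%N -> nonfree (blk i) -> isNF (offs D i + j).
Proof. by move=> lj nf; rewrite /isNF offs_lt // dec_offs. Qed.

Lemma PL {B i j} : B \in Bs -> i \in B -> (j < d_ns D i)%N ->
  posn (offs D i + j) =
  (off nvDs (index B BsS) + (off (d_ns (mkD B)) (index i (sB B)) + j))%N.
Proof.
move=> HB iB lj; have bi := Bs_blk _ HB iB.
have nf : nonfree (blk i) by rewrite bi; case/inBs: HB.
by rewrite /posn NF_of // dec_offs // bi addKn.
Qed.

Lemma nonJ_NF_or_F {p : 'I_(nvars D)} : ~~ Jpos p -> ~~ isNF p -> p \in Fset.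
Proof.
rewrite /Jpos /isNF inE; case: (p < d_n D)%N => //= -> ->; by [].
Qed.

Lemma NF_nonJ p : isNF p -> ~~ Jpos p.
Proof.
rewrite /isNF /Jpos => /andP [-> nf] /=; apply/negP => dJ.
by move: (J_free _ dJ); rewrite nf.
Qed.

Lemma F_nonJ {p : 'I_(nvars D)} : p \in Fset -> ~~ Jpos p /\ ~~ isNF p.
Proof.
rewrite inE /Jpos /isNF; case: (p < d_n D)%N => //= /andP [-> ->]; by [].
Qed.

Lemma NF_bound {p} : isNF p -> (posn p < SNV)%N.
Proof.
move=> Hp; have := Hp; rewrite /isNF => /andP [lp nf].
have HB := blk_Bs nf; set B := blk (dec p) in HB *.
rewrite /posn Hp -/B.
have [lk ek] := index_sB _ HB (blk_mem (dec p)).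
have lj : (p - offs D (dec p) < d_ns D (dec p))%N.
  by have /andP [h1 h2] := dec_spec lp; rewrite ltn_subLR.
pose u := Ordinal (index_BsS HB).
apply: (@off_lt _ nvDs u); rewrite /nvDs /u Ds_index nvars_mkD.
pose k := Ordinal lk.
have := @off_lt _ (d_ns (mkD B)) k (p - offs D (dec p)).
by rewrite /= ek; apply.
Qed.

Lemma posn_bound {p : 'I_(nvars D)} : ~~ Jpos p -> (posn p < MM)%N.
Proof.
move=> nJ; case: (boolP (isNF p)) => NF.
  by rewrite MME (leq_trans (NF_bound NF)) ?leq_addr.
have pF := nonJ_NF_or_F nJ NF.
rewrite /posn (negbTE NF) MME ltn_add2l /mF cardE -(size_map val) index_mem.
by apply/mapP; exists p => //; rewrite mem_enum.
Qed.

Lemma posnF {p : 'I_(nvars D)} : p \in Fset -> posn p = (SNV + index p (enum Fset))%N.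
Proof.
move=> pF; have [_ nNF] := F_nonJ pF; rewrite /posn (negbTE nNF).
by rewrite (index_map val_inj).
Qed.

Lemma posn_inj {p p' : 'I_(nvars D)} : ~~ Jpos p -> ~~ Jpos p' ->
  posn p = posn p' -> p = p'.
Proof.
move=> nJ nJ'.
case: (boolP (isNF p)) => NF; case: (boolP (isNF p')) => NF'.
- move=> E.
  have := NF; rewrite /isNF => /andP [lp nf]; have := NF'; rewrite /isNF => /andP [lp' nf'].
  have HB := blk_Bs nf; have HB' := blk_Bs nf'.
  have [lk ek] := index_sB _ HB (blk_mem (dec p)).
  have [lk' ek'] := index_sB _ HB' (blk_mem (dec p')).
  have lj : (p - offs D (dec p) < d_ns D (dec p))%N.
    by have /andP [h1 h2] := dec_spec lp; rewrite ltn_subLR.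
  have lj' : (p' - offs D (dec p') < d_ns D (dec p'))%N.
    by have /andP [h1 h2] := dec_spec lp'; rewrite ltn_subLR.
  move: E; rewrite /posn NF NF'.
  move: HB HB' lk ek lk' ek'.
  move Bdef : (blk (dec p)) => B; move B'def : (blk (dec p')) => B'.
  move=> HB HB' lk ek lk' ek'.
  pose u := Ordinal (index_BsS HB); pose u' := Ordinal (index_BsS HB').
  have l1 : (off (d_ns (mkD B)) (index (dec p) (sB B)) + (p - offs D (dec p)) < nvDs u)%N.
    rewrite /nvDs /u Ds_index nvars_mkD.
    have := @off_lt _ (d_ns (mkD B)) (Ordinal lk) (p - offs D (dec p)).
    by rewrite /= ek; apply.
  have l2 : (off (d_ns (mkD B')) (index (dec p') (sB B')) + (p' - offs D (dec p')) < nvDs u')%N.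
    rewrite /nvDs /u' Ds_index nvars_mkD.
    have := @off_lt _ (d_ns (mkD B')) (Ordinal lk') (p' - offs D (dec p')).
    by rewrite /= ek'; apply.
  move=> E; have [uu E2] := @off_uniq _ nvDs u u' _ _ l1 l2 E.
  have BB : B = B'.
    have := congr1 val uu => /= /(congr1 (nth set0 BsS)).
    by rewrite !nth_index ?mem_enum.
  move: lk ek lj l1 E2; rewrite BB => lk ek lj l1 E2.
  have lj1 : (p - offs D (dec p) < d_ns (mkD B') (Ordinal lk))%N by rewrite /= ek.
  have lj2 : (p' - offs D (dec p') < d_ns (mkD B') (Ordinal lk'))%N by rewrite /= ek'.
  have [kk jj] := @off_uniq _ (d_ns (mkD B')) (Ordinal lk) (Ordinal lk') _ _ lj1 lj2 E2.
  have dd : dec p = dec p'.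
    by rewrite -ek -ek'; move: kk => /(congr1 val) /= ->.
  apply: ord_inj.
  have /andP [h1 _] := dec_spec lp; have /andP [h1' _] := dec_spec lp'.
  by rewrite -(subnKC h1) -(subnKC h1') jj dd.
- move=> E; have := NF_bound NF; rewrite E /posn (negbTE NF').
  by rewrite ltnNge leq_addr.
- move=> E; have := NF_bound NF'; rewrite -E /posn (negbTE NF).
  by rewrite ltnNge leq_addr.
- have pF := nonJ_NF_or_F nJ NF; have pF' := nonJ_NF_or_F nJ' NF'.
  rewrite (posnF pF) (posnF pF') => /eqP; rewrite eqn_add2l => /eqP E.
  have pe : p \in enum Fset by rewrite mem_enum.
  have pe' : p' \in enum Fset by rewrite mem_enum.
  by rewrite -(nth_index p pe) E nth_index.
Qed.


Lemma nd_le : (d_n D <= nvars D)%N.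
Proof. exact: leq_addr. Qed.

Lemma posn_surj q : (q < MM)%N -> exists p : 'I_(nvars D), ~~ Jpos p /\ posn p = q.
Proof.
move=> lq; case: (ltnP q SNV) => hq.
  have [u [s [ls E]]] := @off_exists _ nvDs q hq.
  have HB : nth set0 BsS u \in Bs := nth_BsS u.
  move: HB ls; set B := nth set0 BsS u => HB ls.
  have ls' : (s < \sum_(k < (rB B).+1) d_ns (mkD B) k)%N.
    by move: ls; rewrite /nvDs /Ds -/B nvars_mkD.
  have [k [j [lj Es]]] := @off_exists _ (d_ns (mkD B)) s ls'.
  move: lj; rewrite /=; set i := nth ord0 (sB B) k => lj.
  have iB : i \in B := nth_sB_in k HB.
  have lp : (offs D i + j < nvars D)%N by apply: leq_trans (offs_lt lj) nd_le.
  have nf : nonfree (blk i) by rewrite (Bs_blk _ HB iB); case/inBs: HB.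
  exists (Ordinal lp); split; first exact/NF_nonJ/NF_of.
  rewrite /= (PL HB iB lj) E Es /i index_uniq ?size_sB ?enum_uniq //.
  by rewrite index_uniq ?size_sB ?enum_uniq.
have lq' : (q - SNV < #|Fset|)%N by rewrite ltn_subLR // -MME.
have [p0 _] : exists p0, p0 \in Fset.
  by apply/set0Pn; rewrite -card_gt0 (leq_trans _ lq').
set p := nth p0 (enum Fset) (q - SNV).
have pF : p \in Fset by rewrite -mem_enum mem_nth // -cardE.
exists p; split; first by case: (F_nonJ pF).
by rewrite (posnF pF) index_uniq ?enum_uniq ?subnKC // -cardE.
Qed.

Definition Yp (i : 'I_r.+1) : Pol MM :=
  \prod_(j < d_ns D i) Xv MM (posn (offs D i + j)) ^+ d_l D i j.
Definition Epoly (j : 'I_r.+1) : Pol MM :=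
  - \sum_(i < r.+1 | i \notin J) w j i 0 *: Yp i.
Definition fmap (p : 'I_(nvars D)) : Pol MM :=
  if Jpos p then Epoly (dec p) else Xv MM (posn p).
Definition hmap (q : 'I_MM) : Pol (nvars D) :=
  if [pick p : 'I_(nvars D) | ~~ Jpos p && (posn p == q)] is Some p then 'X_p else 0.

Lemma XvE' {N k} (h : (k < N)%N) : Xv N k = 'X_(Ordinal h) :> Pol N.
Proof. by rewrite /Xv insubT. Qed.

Lemma substXv' {N M'} {f : 'I_N -> Pol M'} {k} (h : (k < N)%N) :
  subst f (Xv N k) = f (Ordinal h).
Proof. by rewrite XvE' substX. Qed.

Lemma hmapE {p : 'I_(nvars D)} : ~~ Jpos p ->
  subst hmap (Xv MM (posn p)) = 'X_p.
Proof.
move=> nJ; rewrite (substXv' (posn_bound nJ)) /hmap.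
case: pickP => [p' /andP [nJ' /eqP E]|H].
  by rewrite (posn_inj nJ' nJ E).
by move: (H p); rewrite nJ eqxx.
Qed.

Lemma fmapE {p : 'I_(nvars D)} : ~~ Jpos p -> fmap p = Xv MM (posn p).
Proof. by move=> nJ; rewrite /fmap (negbTE nJ). Qed.

Lemma offs_lt' {i j} : (j < d_ns D i)%N -> (offs D i + j < nvars D)%N.
Proof. by move=> lj; apply: leq_trans (offs_lt lj) nd_le. Qed.

Lemma nJ_offs {i j} (lj : (j < d_ns D i)%N) : i \notin J ->
  ~~ Jpos (Ordinal (offs_lt' lj)).
Proof. by move=> iJ; rewrite /Jpos /= dec_offs // (negbTE iJ) andbF. Qed.

Lemma Tmon_f i : i \notin J -> subst fmap (Tmon D i) = Yp i.
Proof.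
move=> iJ; rewrite /Tmon subst_prod; apply: eq_bigr => j _.
rewrite substXn (substXv' (offs_lt' (ltn_ord j))) fmapE //.
exact: nJ_offs.
Qed.

Lemma Yp_h i : i \notin J -> subst hmap (Yp i) = Tmon D i.
Proof.
move=> iJ; rewrite /Yp subst_prod; apply: eq_bigr => j _.
rewrite substXn; have := hmapE (nJ_offs (ltn_ord j) iJ); rewrite /= => ->.
by rewrite (XvE' (offs_lt' (ltn_ord j))).
Qed.


Lemma JL {j} : j \in J -> j \in Lset.
Proof. by case: HJ => /subsetP sJ _; apply: sJ. Qed.

Lemma TmonJ {j} : j \in J -> Tmon D j = Xv (nvars D) (offs D j).
Proof.
move=> /JL; rewrite inE => /andP [/eqP ns1 /eqP l1].
by rewrite /Tmon ns1 big_ord1 /= addn0 l1 expr1.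
Qed.

Lemma ns_pos i : (0 < d_ns D i)%N.
Proof. by case: HD => _ nsp _ _ _; apply: nsp. Qed.

Lemma notJ_B {B i} : B \in Bs -> i \in B -> i \notin J.
Proof.
move=> HB iB; apply/negP => /J_free; rewrite (Bs_blk _ HB iB).
by case/inBs: HB => ->.
Qed.

Lemma hf_id (s : 'I_(nvars D)) : in_ideal (rel_gens D) (subst hmap (fmap s) - 'X_s).
Proof.
case: (boolP (Jpos s)) => Js; last first.
  by rewrite /fmap (negbTE Js) hmapE // subrr; exact: in_ideal0.
have /andP [ls dJ] := Js; move: dJ; set j := dec s => jJ.
have /andP [h1 h2] := dec_spec ls.
have sj : nat_of_ord s = offs D j.
  move: h2; rewrite -/j; have := JL jJ; rewrite inE => /andP [/eqP -> _].
  by rewrite addn1 ltnS => h2; apply/eqP; rewrite eqn_leq h1 h2.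
have Xs : 'X_s = Tmon D j by rewrite TmonJ // -sj XvE.
rewrite /fmap Js -/j /Epoly substN subst_sum.
rewrite (eq_bigr (fun i => w j i 0 *: Tmon D i)); last first.
  by move=> i iJ; rewrite substZ Yp_h.
have [Aw wjj wj0] := (HJ.2 j jJ).
have Eg : g_v D (w j) = Tmon D j + \sum_(i < r.+1 | i \notin J) w j i 0 *: Tmon D i.
  rewrite /g_v (bigID (mem J)) /=; congr (_ + _).
  rewrite (bigD1 j) //= wjj scale1r big1 ?addr0 // => i /andP [iJ ij].
  by rewrite wj0 // scale0r.
rewrite Xs -opprD addrC -Eg; apply/in_idealN/in_ideal_gen.
by exists (w j).
Qed.

Lemma fh_id (q : 'I_MM) : in_ideal (tens_gens Ds mF) (subst fmap (hmap q) - 'X_q).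
Proof.
rewrite /hmap; case: pickP => [p /andP [nJ /eqP E]|H].
  by rewrite substX fmapE // E XvE subrr; exact: in_ideal0.
have [p [nJ E]] := posn_surj _ (ltn_ord q).
by move: (H p); rewrite nJ E eqxx.
Qed.

Lemma emb_gv (u : 'I_tB) (x : 'cV[CC]_(rB (nth set0 BsS u)).+1) :
  subst (fun s : 'I_(nvars (Ds u)) => Xv (tens_nvars Ds mF) (tens_offs Ds u + s))
        (g_v (Ds u) x) =
  \sum_(k < (rB (nth set0 BsS u)).+1) x k 0 *: Yp (nth ord0 (sB (nth set0 BsS u)) k).
Proof.
have HB := nth_BsS u; move: x HB; set B := nth set0 BsS u => x HB.
rewrite /g_v subst_sum; apply: eq_bigr => k _; rewrite substZ; congr (_ *: _).
rewrite /Tmon subst_prod /Yp; apply: eq_bigr => j _; rewrite substXn.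
have iB : nth ord0 (sB B) k \in B := nth_sB_in k HB.
have lj : (j < d_ns D (nth ord0 (sB B) k))%N := ltn_ord j.
have h : (offs (Ds u) k + j < nvars (Ds u))%N.
  rewrite /nvars addn0; exact: (@off_lt _ (d_ns (Ds u)) k j).
rewrite (substXv' h) /= (PL HB iB lj) index_uniq ?size_sB ?enum_uniq //.
by rewrite index_uniq ?size_sB ?enum_uniq.
Qed.

Lemma h_gens g : tens_gens Ds mF g -> in_ideal (rel_gens D) (subst hmap g).
Proof.
case=> u [g0 [[x [Ax ->]] ->]]; rewrite emb_gv.
have HB := nth_BsS u; move: x Ax HB; set B := nth set0 BsS u => x Ax HB.
rewrite subst_sum (eq_bigr (fun k => x k 0 *: Tmon D (nth ord0 (sB B) k))); last first.
  by move=> k _; rewrite substZ Yp_h // (notJ_B HB (nth_sB_in k HB)).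
apply: in_ideal_gen; exists (ext B x); split.
  by rewrite -MB_ext //; apply/eqP; rewrite -AuE // Ax.
rewrite /g_v (@RI _ B) //; last by move=> i iB; rewrite mxE (negbTE iB) scale0r.
by apply: eq_bigr => k _; rewrite ext_nth.
Qed.


Lemma wA {j} : j \in J -> A *m w j = 0.
Proof. by move=> jJ; have [] := HJ.2 j jJ. Qed.
Lemma wjj {j} : j \in J -> w j j 0 = 1.
Proof. by move=> jJ; have [] := HJ.2 j jJ. Qed.
Lemma wj0 {j j'} : j \in J -> j' \in J -> j' != j -> w j j' 0 = 0.
Proof. by move=> jJ; have [_ _] := HJ.2 j jJ; apply. Qed.

Lemma offs0_lt i : (offs D i < nvars D)%N.
Proof. by have := offs_lt' (ns_pos i); rewrite addn0. Qed.

Lemma dec_offs0 i : dec (offs D i) = i.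
Proof. by have := dec_offs _ _ (ns_pos i); rewrite addn0. Qed.

Lemma f_gens g : rel_gens D g -> in_ideal (tens_gens Ds mF) (subst fmap g).
Proof.
case=> v [Av ->].
set v' : 'cV[CC]_r.+1 := v - \sum_(j in J) v j 0 *: w j.
have v'E i : v' i 0 = v i 0 - \sum_(j in J) v j 0 * w j i 0.
  rewrite /v' !mxE summxE; congr (_ - _); apply: eq_bigr => j _; by rewrite !mxE.
have Kv' : Kp v'.
  split.
    rewrite mulmxBr Av sub0r mulmx_sumr big1 ?oppr0 // => j jJ.
    by rewrite -scalemxAr (wA jJ) scaler0.
  move=> i iJ; rewrite v'E (bigD1 i) //= (wjj iJ) mulr1.
  have -> : \sum_(j in J | j != i) v j 0 * w j i 0 = 0.
    by apply: big1 => j /andP [jJ ji]; rewrite (wj0 jJ iJ) ?mulr0 // eq_sym.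
  by rewrite addr0 subrr.
have E1 : subst fmap (g_v D v) = \sum_i v' i 0 *: Yp i.
  rewrite /g_v subst_sum (bigID (mem J)) /= [RHS](bigID (mem J)) /=.
  rewrite [X in _ = X + _]big1 ?add0r; last first.
    by move=> i iJ; rewrite (Kv'.2 i iJ) scale0r.
  rewrite (eq_bigr (fun i => v i 0 *: Epoly i)); last first.
    move=> i iJ; rewrite substZ TmonJ // (substXv' (offs0_lt i)) /fmap /Jpos /=.
    by rewrite dec_offs0 iJ (leq_trans _ (offs_lt (ns_pos i))) ?addn0.
  rewrite [X in _ + X = _](eq_bigr (fun i => v i 0 *: Yp i)); last first.
    by move=> i iJ; rewrite substZ Tmon_f.
  have EJ : \sum_(i in J) v i 0 *: Epoly i =
      - \sum_(i < r.+1 | i \notin J) (\sum_(j in J) v j 0 * w j i 0) *: Yp i.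
    rewrite /Epoly (eq_bigr (fun j => - \sum_(i < r.+1 | i \notin J) (v j 0 * w j i 0) *: Yp i)).
      rewrite sumrN; congr (- _); rewrite exchange_big /=.
      by apply: eq_bigr => i iJ; rewrite scaler_suml.
    move=> j jJ; rewrite scalerN scaler_sumr; congr (- _).
    by apply: eq_bigr => i iJ; rewrite scalerA.
  rewrite EJ [RHS](eq_bigr (fun i => v i 0 *: Yp i - (\sum_(j in J) v j 0 * w j i 0) *: Yp i)
    (P := fun i => i \notin J)); last by move=> i iJ; rewrite v'E scalerBl.
  by rewrite sumrB addrC.
have E2 : \sum_i v' i 0 *: Yp i = \sum_(u < tB)
    \sum_(k < (rB (nth set0 BsS u)).+1)
       proj (nth set0 BsS u) v' k 0 *: Yp (nth ord0 (sB (nth set0 BsS u)) k).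
  rewrite (bigID (fun i => nonfree (blk i))) /= [X in _ + X]big1 ?addr0; last first.
    by move=> i nf; rewrite (Kp_free _ _ nf Kv') scale0r.
  rewrite (partition_big blk (mem Bs)) /=; last by move=> i nf; exact: blk_Bs.
  rewrite -big_enum /= (big_nth set0) -/BsS big_mkord.
  apply: eq_bigr => u _; have HB := nth_BsS u; move: HB; set B := nth set0 BsS u => HB.
  rewrite (eq_bigl (mem B)); last first.
    move=> i /=; apply/andP/idP => [[nf /eqP <-]|iB]; first exact: blk_mem.
    by rewrite (Bs_blk _ HB iB) eqxx; case/inBs: HB.
  rewrite -big_enum [LHS](big_nth ord0) (size_sB HB) big_mkord.
  rewrite [RHS](eq_bigr (fun k : 'I_(rB B).+1 => v' (nth ord0 (sB B) k) 0 *: Yp (nth ord0 (sB B) k))) //.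
  by move=> k _; rewrite mxE.
rewrite E1 E2; apply: in_ideal_sum => u _; apply: in_ideal_gen.
exists u, (g_v (Ds u) (proj (nth set0 BsS u) v')); split; last by rewrite emb_gv.
exists (proj (nth set0 BsS u) v'); split => //.
apply/eqP; rewrite AuE ?nth_BsS //; apply/eqP; apply: proj_ker => //.
exact: nth_BsS.
Qed.

Lemma m_le : (d_m D <= mF)%N.
Proof.
have := card_imset [set: 'I_(d_m D)] (@rshift_inj (d_n D) (d_m D)).
rewrite cardsT card_ord => <-; rewrite /mF; apply: subset_leq_card.
apply/subsetP => p /imsetP [k _ ->]; rewrite inE /= ltnNge leq_addr.
by [].
Qed.

Theorem main_sec :
  exists (t : nat) (Ds : 'I_t -> data) (m' : nat),
    [/\ forall u, valid_data (Ds u),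
        forall u, indecomposable (Ds u),
        forall u, d_m (Ds u) = 0%N,
        (d_m D <= m')%N
      & presented_iso (rel_gens D) (tens_gens Ds m')].
Proof.
exists tB, Ds, mF; split.
- by move=> u; apply: valid_mkD; exact: nth_BsS.
- by move=> u; apply: indec_mkD; exact: nth_BsS.
- by [].
- exact: m_le.
- apply: (iso_crit _ _ fmap hmap).
  + exact: f_gens.
  + exact: h_gens.
  + exact: hf_id.
  + exact: fh_id.
Qed.

End Main.

Theorem proposition3p2 (D : data) :
  valid_data D ->
  exists (t : nat) (Ds : 'I_t -> data) (m' : nat),
    [/\ forall u, valid_data (Ds u),
        forall u, indecomposable (Ds u),
        forall u, d_m (Ds u) = 0%N,
        (d_m D <= m')%N
      & presented_iso (rel_gens D) (tens_gens Ds m')].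
Proof.
move=> HD; have [J [w [HJ HP]]] := existsJ (d_A D) (Lset D).
exact: (@main_sec D HD J w HJ HP).
Qed.
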